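(* Let $n_0,L\in\mathbb{N}_+$, $n_1,\dots,n_L\in\mathbb{N}_+$, $h_l\in\mathrm{RL}(n_{l-1},n_l)$ for $l=1,\dots,L$, $\mathbf{h}=(h_1,\dots,h_L)$, and $\gamma\in\Gamma$. Then for every $l\in\{2,\dots,L\}$, $$\tilde{\mathcal{H}}^{(l)}(\mathcal{S}^{(l)}_{\mathbf{h}})\preceq\varphi^{(\gamma)}_{n_l}\big(\tilde{\mathcal{H}}^{(l-1)}(\mathcal{S}^{(l-1)}_{\mathbf{h}})\big).$$
   Context: $\sigma(x)=\max(0,x)$; $\mathrm{RL}(n,n')$ ($n,n'\in\mathbb{N}_+$) is the set of maps $h:\mathbb{R}^n\to\mathbb{R}^{n'}$, $h(x)_i=\sigma(\langle x,w_i\rangle+b_i)$ for some $W\in\mathbb{R}^{n'\times n}$ with rows $w_i$, $b\in\mathbb{R}^{n'}$; convention: $\mathrm{RL}(0,n')$ are constant maps $\{0\}\to\mathbb{R}^{n'}$ with $\mathcal{H}_{n'}(\mathcal{S}_h)={\rm e}_0$. Signature $S_h(x)_i=1$ iff $\langle x,w_i\rangle+b_i>0$ else $0$; $\mathcal{S}_h=\{S_h(x)\}$; $|s|=\sum_i s_i$. Multi signature $S_{\mathbf{h}}(x)=(S_{h_1}(x),S_{h_2}(h_1(x)),\dots,S_{h_L}(h_{L-1}\circ\cdots\circ h_1(x)))$, $\mathcal{S}_{\mathbf{h}}=\{S_{\mathbf{h}}(x):x\in\mathbb{R}^{n_0}\}$, and $\mathcal{S}^{(l)}_{\mathbf{h}}=\{(s_1,\dots,s_l):(s_1,\dots,s_L)\in\mathcal{S}_{\mathbf{h}}\}$.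 $V$: sequences $(v_j)_{j\in\mathbb{N}}$ of nonnegative integers with finite sum; ${\rm e}_i$ has $({\rm e}_i)_j=\delta_{ij}$; $v\preceq w$ iff $\sum_{j\ge J}v_j\le\sum_{j\ge J}w_j$ for all $J$; $\max_i(v^{(i)})_J=\max_i\sum_{j\ge J}v^{(i)}_j-\max_i\sum_{j\ge J+1}v^{(i)}_j$ for finite families. $\mathcal{H}_{n'}(\mathcal{S})=(|\{s\in\mathcal{S}:|s|=j\}|)_j$. $\tilde{\mathcal{H}}^{(l)}(U)=(|\{(s_1,\dots,s_l)\in U:\min(n_0,|s_1|,\dots,|s_l|)=j\}|)_{j\in\mathbb{N}}$ for $U\subseteq\{0,1\}^{n_1}\times\dots\times\{0,1\}^{n_l}$. $\Gamma$: families $(\gamma_{n,n'})_{n'\in\mathbb{N}_+,n\in\{0,\dots,n'\}}$ in $V$ with (i) $\max\{\mathcal{H}_{n'}(\mathcal{S}_h):h\in\mathrm{RL}(n,n')\}\preceq\gamma_{n,n'}$, (ii) $n\le\tilde n\le n'\Rightarrow\gamma_{n,n'}\preceq\gamma_{\tilde n,n'}$. $\mathrm{cl}_{i^*}(v)_i=v_i$ ($i<i^*$), $\sum_{j\ge i^*}v_j$ ($i=i^*$), $0$ ($i>i^*$). $\varphi^{(\gamma)}_{n'}(v)=\sum_{n=0}^\infty v_n\,\mathrm{cl}_{\min(n,n')}(\gamma_{\min(n,n'),n'})$. *)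

(* Defs.v *)
From HB Require Import structures.
From mathcomp Require Import all_boot all_order all_algebra.
From mathcomp Require Import boolp reals.
Set Implicit Arguments. Unset Strict Implicit. Unset Printing Implicit Defensive.
Import Order.TTheory GRing.Theory Num.Theory.

(* v_j := nth 0 v j ; entries beyond size v are 0. *)
Definition ventry (v : seq nat) (j : nat) : nat := nth 0%N v j.
Definition tailsum (v : seq nat) (J : nat) : nat := sumn (drop J v).
Definition vle (v w : seq nat) : Prop := forall J : nat, tailsum v J <= tailsum w J.
Definition vadd (v w : seq nat) : seq nat :=
  mkseq (fun i => ventry v i + ventry w i) (maxn (size v) (size w)).
Definition vscale (c : nat) (v : seq nat) : seq nat := map (fun a => c * a) v.
Definition vunit (i : nat) : seq nat := mkseq (fun j => nat_of_bool (j == i)) i.+1.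
Definition cl (istar : nat) (v : seq nat) : seq nat :=
  mkseq (fun i => if i < istar then ventry v i
                  else if i == istar then tailsum v istar else 0%N) istar.+1.

Local Open Scope ring_scope.
Record layer (R : realType) (n n' : nat) := Layer {
  lW : 'M[R]_(n', n);
  lb : 'cV[R]_n' }.

Definition relu (R : realType) (t : R) : R := Num.max t 0.
Definition preact (R : realType) n n' (h : layer R n n') (x : 'cV[R]_n) : 'cV[R]_n' :=
  lW h *m x + lb h.
Definition apply_layer (R : realType) n n' (h : layer R n n') (x : 'cV[R]_n) : 'cV[R]_n' :=
  map_mx (@relu R) (preact h x).
Definition sig (R : realType) n n' (h : layer R n n') (x : 'cV[R]_n) : {ffun 'I_n' -> bool} :=
  [ffun i => 0 < preact h x i 0].
Local Close Scope ring_scope.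

Definition ones n (s : {ffun 'I_n -> bool}) : nat := \sum_(i < n) nat_of_bool (s i).

Definition sigset (R : realType) n n' (h : layer R n n') : {set {ffun 'I_n' -> bool}} :=
  [set s | `[< exists x : 'cV[R]_n, sig h x = s >]].

Definition Hist n' (S : {set {ffun 'I_n' -> bool}}) : seq nat :=
  mkseq (fun j => #|[set s in S | ones s == j]|) n'.+1.

(* gamma n n' = γ_{n,n'} (only used for n' >= 1, n <= n').
   (i): for n >= 1, max_{h in RL(n,n')} H_{n'}(S_h) ⪯ γ_{n,n'}, stated pointwise
        (tail sums of the max are the max of tail sums);
        for n = 0, the convention H_{n'}(S_h) = e_0. *)
Definition isGamma (R : realType) (gamma : nat -> nat -> seq nat) : Prop :=
  (forall n' n : nat, 0 < n' -> n <= n' ->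
     (if n == 0 then vle (vunit 0) (gamma 0 n')
      else forall h : layer R n n', vle (Hist (sigset h)) (gamma n n')))
  /\
  (forall n' n nt : nat, 0 < n' -> n <= nt -> nt <= n' ->
     vle (gamma n n') (gamma nt n')).

Definition phi (gamma : nat -> nat -> seq nat) (n' : nat) (v : seq nat) : seq nat :=
  \big[vadd/[::]]_(0 <= n < size v)
     vscale (ventry v n) (cl (minn n n') (gamma (minn n n') n')).

(* dims l = n_l ; layers l : RL(n_l, n_{l+1}) is h_{l+1}. *)
Fixpoint feat (R : realType) (dims : nat -> nat)
  (layers : forall l : nat, layer R (dims l) (dims l.+1)) (l : nat)
  : 'cV[R]_(dims 0) -> 'cV[R]_(dims l) :=
  match l with
  | 0 => fun x => x
  | l'.+1 => fun x => apply_layer (layers l') (feat layers l' x)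
  end.

(* truncated multi signature tuples (s_1,...,s_l); component k : 'I_l is s_{k+1} *)
Definition msigT (dims : nat -> nat) (l : nat) : finType :=
  {dffun forall k : 'I_l, {ffun 'I_(dims k.+1) -> bool}}.

Definition msig (R : realType) (dims : nat -> nat)
  (layers : forall l : nat, layer R (dims l) (dims l.+1)) (l : nat)
  (x : 'cV[R]_(dims 0)) : msigT dims l :=
  [ffun k : 'I_l => sig (layers k) (feat layers k x)].

Definition msigset (R : realType) (dims : nat -> nat)
  (layers : forall l : nat, layer R (dims l) (dims l.+1)) (l : nat)
  : {set msigT dims l} :=
  [set t | `[< exists x : 'cV[R]_(dims 0), msig layers l x = t >]].

Definition minones (dims : nat -> nat) (l : nat) (t : msigT dims l) : nat :=
  \big[minn/dims 0]_(k < l) ones (t k).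

Definition Htil (dims : nat -> nat) (l : nat) (U : {set msigT dims l}) : seq nat :=
  mkseq (fun j => #|[set t in U | minones t == j]|) (dims 0).+1.

(* Main.v *)
Require Import Defs.
From mathcomp Require Import all_boot all_order all_algebra.
From mathcomp Require Import boolp reals.
Set Implicit Arguments. Unset Strict Implicit. Unset Printing Implicit Defensive.
Import Order.TTheory GRing.Theory Num.Theory.

Lemma tsE v : forall J N, size v <= N ->
  tailsum v J = \sum_(J <= j < N) ventry v j.
Proof.
elim: v => [|a v IH] J N /=.
  move=> _; rewrite /tailsum drop_oversize //= big1 // => j _.
  by rewrite /ventry nth_nil.
case: N => [//|N]; rewrite ltnS => hs.
case: J => [|J].
  rewrite big_nat_recl // /tailsum drop0 /= -(IH 0 N hs) /tailsum drop0.
  by [].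
rewrite big_add1 /= -(IH J N hs) /tailsum /=.
by [].
Qed.

Lemma ts_vadd v w J : tailsum (vadd v w) J = tailsum v J + tailsum w J.
Proof.
set N := maxn (size v) (size w).
rewrite (tsE J (leq_maxl (size v) (size w))) (tsE J (leq_maxr (size v) (size w))).
rewrite (@tsE _ J N); last by rewrite size_mkseq.
rewrite -big_split /=; apply: eq_big_nat => j /andP[_ hj].
by rewrite /ventry nth_mkseq.
Qed.

Lemma sumn_scale c s : sumn (map (fun a => c * a) s) = c * sumn s.
Proof. by elim: s => [|a s IH] /=; rewrite ?muln0 // IH mulnDr. Qed.

Lemma ts_vscale c v J : tailsum (vscale c v) J = c * tailsum v J.
Proof. by rewrite /tailsum /vscale -map_drop sumn_scale. Qed.

Lemma ts_nil J : tailsum [::] J = 0.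
Proof. by rewrite /tailsum drop_oversize. Qed.

Lemma ts_big (K : nat) (F : nat -> seq nat) J :
  tailsum (\big[vadd/[::]]_(0 <= n < K) F n) J = \sum_(0 <= n < K) tailsum (F n) J.
Proof.
apply: (big_morph (fun v => tailsum v J)); first by move=> v w; exact: ts_vadd.
exact: ts_nil.
Qed.

Lemma ts_cl i v J : tailsum (cl i v) J = if J <= i then tailsum v J else 0.
Proof.
rewrite /cl (@tsE _ J i.+1); last by rewrite size_mkseq.
case: ifP => hJ; last first.
  rewrite big_geq //; by rewrite ltnNge hJ.
rewrite big_nat_recr //= [ventry _ i]/ventry nth_mkseq // ltnn eqxx.
set N := maxn (size v) i.+1.
rewrite (@tsE v J N) ?leq_maxl // (@tsE v i N) ?leq_maxl //.
rewrite [in RHS](@big_cat_nat _ _ _ i) //=; last by rewrite (leq_trans (leqnSn i)) ?leq_maxr.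
congr (_ + _).
apply: eq_big_nat => j /andP[_ hj]; by rewrite /ventry nth_mkseq ?hj // ltnW.
Qed.

Lemma sum_ind_w (m J N : nat) (c : nat -> nat) :
  \sum_(J <= j < N) (m == j) * c j = (J <= m < N) * c m.
Proof.
elim: N => [|N IH].
  by rewrite big_geq // ltn0 andbF.
case: (leqP J N) => hJN.
  rewrite big_nat_recr //= IH.
  rewrite ltnS; case: (ltngtP m N) => hm.
  - by rewrite /= addn0.
  - by rewrite andbF /= !mul0n.
  - by rewrite hm hJN andbF /= mul0n add0n mul1n.
rewrite big_geq // ltnS.
case: (leqP J m) => hm //=; by rewrite leqNgt (leq_trans hJN hm).
Qed.

Lemma card_sum (T : finType) (U : {set T}) (P : pred T) :
  #|[set t in U | P t]| = \sum_(t in U) P t.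
Proof.
rewrite -sum1_card [LHS]big_mkcond [RHS]big_mkcond /=.
by apply: eq_bigr => t _; rewrite inE; case: (t \in U); case: (P t).
Qed.

Lemma ts_hist (T : finType) (U : {set T}) (f : T -> nat) N J :
  (forall t, f t <= N) ->
  tailsum (mkseq (fun j => #|[set t in U | f t == j]|) N.+1) J = \sum_(t in U) (J <= f t).
Proof.
move=> hf; rewrite (@tsE _ J N.+1) ?size_mkseq //.
rewrite (@eq_big_nat _ _ _ _ _ _ (fun j => \sum_(t in U) (f t == j))); last first.
  by move=> j /andP[_ hj]; rewrite /ventry nth_mkseq // card_sum.
rewrite exchange_big /=; apply: eq_bigr => t _.
transitivity (\sum_(J <= j < N.+1) (f t == j) * 1).
  by apply: eq_bigr => j _; rewrite muln1.
by rewrite sum_ind_w ltnS hf andbT muln1.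
Qed.

Lemma ts_phiish (T : finType) (U : {set T}) (f : T -> nat) M J (G : nat -> seq nat) :
  (forall t, f t <= M) ->
  tailsum (\big[vadd/[::]]_(0 <= n < size (mkseq (fun j => #|[set t in U | f t == j]|) M.+1))
      vscale (ventry (mkseq (fun j => #|[set t in U | f t == j]|) M.+1) n) (G n)) J
  = \sum_(t in U) tailsum (G (f t)) J.
Proof.
move=> hf; rewrite ts_big size_mkseq.
rewrite (@eq_big_nat _ _ _ _ _ _ (fun n => \sum_(t in U) (f t == n) * tailsum (G n) J)); last first.
  move=> n /andP[_ hn]; rewrite ts_vscale /ventry nth_mkseq // card_sum big_distrl /=.
  by [].
rewrite exchange_big /=; apply: eq_bigr => t _.
by rewrite sum_ind_w ltnS hf /= mul1n.
Qed.

Lemma bigminn_le k (F : 'I_k -> nat) a : \big[minn/a]_(i < k) F i <= a.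
Proof.
elim/big_rec: _ => [|i x _ h]; first exact: leqnn.
exact: leq_trans (geq_minr _ _) h.
Qed.

Lemma ones_le n (s : {ffun 'I_n -> bool}) : ones s <= n.
Proof.
rewrite /ones -[n in _ <= n]card_ord -sum1_card; apply: leq_sum => i _; exact: leq_b1.
Qed.

Definition msprefix (dims : nat -> nat) k (t : msigT dims k.+1) : msigT dims k :=
  [ffun i : 'I_k => t (widen_ord (leqnSn k) i)].
Definition lastsig (dims : nat -> nat) k (t : msigT dims k.+1) : {ffun 'I_(dims k.+1) -> bool} :=
  t ord_max.

Lemma bigmin_recr n a (F : 'I_n.+1 -> nat) :
  \big[minn/a]_(i < n.+1) F i = minn (\big[minn/a]_(i < n) F (widen_ord (leqnSn n) i)) (F ord_max).
Proof.
elim: n F => [|n IH] F.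
  rewrite big_ord_recl !big_ord0 minnC; congr (minn _ _); congr (F _); exact: val_inj.
rewrite big_ord_recl IH [in RHS]big_ord_recl minnA; congr (minn (minn _ _) _).
- congr (F _); exact: val_inj.
- apply: eq_bigr => i _; congr (F _); exact: val_inj.
- congr (F _); exact: val_inj.
Qed.

Lemma minones_S dims k (t : msigT dims k.+1) :
  minones t = minn (minones (msprefix t)) (ones (lastsig t)).
Proof.
rewrite /minones (@bigmin_recr k (dims 0) (fun i => ones (t i))) /=; congr (minn _ _).
by apply: eq_bigr => i _; rewrite /msprefix ffunE.
Qed.

Lemma prefix_inj dims k (t1 t2 : msigT dims k.+1) :
  msprefix t1 = msprefix t2 -> lastsig t1 = lastsig t2 -> t1 = t2.
Proof.
move=> hp hl; apply/ffunP => i.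
case: (unliftP ord_max i) => [j ->|->]; last exact: hl.
have -> : lift ord_max j = widen_ord (leqnSn k) j by apply: val_inj; rewrite /= /bump leqNgt ltn_ord.
by have := congr1 (fun f : msigT dims k => f (j : 'I_k)) hp; rewrite /msprefix !ffunE.
Qed.

Section Net.
Variables (R : realType) (dims : nat -> nat)
  (layers : forall l : nat, layer R (dims l) (dims l.+1)).

Lemma msig_prefix k x : msprefix (msig layers k.+1 x) = msig layers k x.
Proof. by apply/ffunP => i; rewrite /msprefix /msig !ffunE. Qed.

Lemma msig_last k x : lastsig (msig layers k.+1 x) = sig (layers k) (feat layers k x).
Proof. by rewrite /lastsig /msig ffunE. Qed.

Local Open Scope ring_scope.

Definition Dm n (s : {ffun 'I_n -> bool}) : 'M[R]_n := diag_mx (\row_i (s i)%:R).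

Lemma rank_Dm n (s : {ffun 'I_n -> bool}) : (\rank (Dm s) <= ones s)%N.
Proof.
have -> : Dm s = \sum_(i | s i) delta_mx i i.
  apply/matrixP => a b; rewrite /Dm summxE !mxE.
  case: (boolP (s a)) => ha.
    rewrite (bigD1 a) //= big1 ?addr0 => [|i /andP[_ hia]].
      by rewrite mxE eqxx /=; case: (eqVneq a b).
    by rewrite mxE eq_sym (negbTE hia).
  rewrite big1 /=; first by rewrite mulr0n mul0rn.
  move=> i hi; rewrite mxE.
  by case: (eqVneq a i) => [e|//]; rewrite e hi in ha.
rewrite /ones big_mkcond /=.
apply: (big_ind2 (fun (A : 'M[R]_n) (m : nat) => (\rank A <= m)%N)).
- by rewrite mxrank0.
- move=> A1 m1 A2 m2 h1 h2; apply: leq_trans (mxrank_add _ _) _; exact: leq_add.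
- move=> i _; case: (s i) => /=; last by rewrite mxrank0. by rewrite (@mxrank_delta R n n i i).
Qed.

Lemma relu_Dm n (v : 'cV[R]_n) :
  map_mx (@relu R) v = Dm [ffun i => 0 < v i 0] *m v.
Proof.
apply/matrixP => i j; rewrite ord1 /Dm mul_diag_mx !mxE ffunE /relu.
case: (ltrP 0 (v i 0)) => h /=.
  by rewrite mul1r.
by rewrite mul0r.
Qed.

Lemma affine j (q : msigT dims j) :
  exists A : 'M[R]_(dims j, dims 0), exists c : 'cV[R]_(dims j),
    (\rank A <= minones q)%N /\ forall x, msig layers j x = q -> feat layers j x = A *m x + c.
Proof.
elim: j q => [|j IH] q.
  exists 1%:M, 0; split; first by rewrite /minones big_ord0 rank_leq_col.
  by move=> x _; rewrite /= mul1mx addr0.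
have [A [c [hr hx]]] := IH (msprefix q).
set s := lastsig q.
exists (Dm s *m lW (layers j) *m A), (Dm s *m (lW (layers j) *m c + lb (layers j))).
split.
  rewrite minones_S leq_min; apply/andP; split.
    exact: leq_trans (mxrankM_maxr _ _) hr.
  by rewrite -mulmxA; apply: leq_trans (mxrankM_maxl _ _) (rank_Dm _).
move=> x hq.
have h1 : msig layers j x = msprefix q by rewrite -hq msig_prefix.
have h2 : sig (layers j) (feat layers j x) = s by rewrite /s -hq msig_last.
rewrite /= /apply_layer relu_Dm (hx _ h1).
have -> : [ffun i => 0 < preact (layers j) (A *m x + c) i 0] = s.
  by rewrite -h2 /sig (hx _ h1).
by rewrite /preact !mulmxDr !mulmxA addrA.
Qed.

End Net.

Lemma sum_subset (T : finType) (A B : {set T}) (f : T -> nat) :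
  A \subset B -> \sum_(t in A) f t <= \sum_(t in B) f t.
Proof.
move=> hAB; rewrite [X in _ <= X](big_setID A) /=.
by rewrite (setIidPr hAB) leq_addr.
Qed.

Section Net2.
Variables (R : realType) (dims : nat -> nat)
  (layers : forall l : nat, layer R (dims l) (dims l.+1))
  (gamma : nat -> nat -> seq nat) (hgamma : isGamma R gamma).

Lemma bound_layer N d (h : layer R d N) J (E : {set {ffun 'I_N -> bool}}) :
  0 < N -> d <= N -> J <= d -> E \subset sigset h ->
  \sum_(s in E) (J <= ones s) <= tailsum (gamma d N) J.
Proof.
move=> hN hdN hJ hsub; apply: leq_trans (sum_subset _ hsub) _.
case: d h hdN hJ {hsub} => [|d] h hdN hJ.
  move: hJ; rewrite leqn0 => /eqP ->.
  have h1 : \sum_(s in sigset h) (0 <= ones s) <= 1.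
    rewrite (eq_bigr (fun=> 1)) // sum1_card.
    rewrite -(cards1 (sig h 0)); apply: subset_leq_card; apply/subsetP => s.
    rewrite !inE => /asboolP [x <-].
    by rewrite [x]flatmx0.
  apply: leq_trans h1 _.
  have := (hgamma.1 N 0 hN (leq0n N)) => /= /(_ 0).
  by [].
have := (hgamma.1 N d.+1 hN hdN) => /= /(_ h J).
by rewrite /Hist (ts_hist _ _ (@ones_le N)).
Qed.

Lemma per_prefix k (p : msigT dims k) (E : {set {ffun 'I_(dims k.+1) -> bool}}) J :
  0 < dims k.+1 ->
  (forall s, s \in E -> exists x, msig layers k x = p /\ sig (layers k) (feat layers k x) = s) ->
  \sum_(s in E) (J <= minn (minones p) (ones s)) <=
  tailsum (cl (minn (minones p) (dims k.+1)) (gamma (minn (minones p) (dims k.+1)) (dims k.+1))) J.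
Proof.
move=> hN hE.
set m := minones p; set N := dims k.+1; set t := minn m N.
rewrite ts_cl.
case: (leqP J t) => hJt; last first.
  rewrite big1 // => s _.
  suff -> : (J <= minn m (ones s)) = false by [].
  apply/negbTE; rewrite -ltnNge.
  apply: leq_ltn_trans hJt; rewrite /t leq_min geq_minl /=.
  exact: leq_trans (geq_minr _ _) (ones_le s).
have [A [c [hr hx]]] := affine layers p.
pose M := (lW (layers k) *m A)%R.
pose b' := (lW (layers k) *m c + lb (layers k))%R.
have hM : \rank M <= t.
  rewrite /t leq_min rank_leq_row andbT.
  exact: leq_trans (mxrankM_maxr _ _) hr.
pose P := (col_ebase M *m (pid_mx (\rank M) : 'M[R]_(N, t)))%R.
pose Q := ((pid_mx (\rank M) : 'M[R]_(t, dims 0)) *m row_ebase M)%R.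
have hPQ : (P *m Q = M)%R.
  by rewrite /P /Q mulmxA -(mulmxA (col_ebase M)) pid_mx_id // mulmx_ebase.
pose h' := Layer P b'.
have hsub : E \subset sigset h'.
  apply/subsetP => s /hE [x [hpx <-]].
  rewrite inE; apply/asboolP; exists (Q *m x)%R.
  apply/ffunP => i; rewrite /sig !ffunE /preact /= (hx _ hpx) mulmxA hPQ.
  by rewrite /M mulmxDr -!mulmxA addrA.
apply: (@leq_trans (\sum_(s in E) (J <= ones s))).
  by apply: leq_sum => s _; rewrite leq_min; case: (J <= ones s); case: (J <= m).
exact: bound_layer hN (geq_minr m N) hJt hsub.
Qed.
End Net2.

Theorem mainTheorem4 (R : realType) (L : nat) (dims : nat -> nat)
  (dims_pos : forall l : nat, l <= L -> 0 < dims l)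
  (layers : forall l : nat, layer R (dims l) (dims l.+1))
  (gamma : nat -> nat -> seq nat) (hgamma : isGamma R gamma) :
  forall l : nat, 2 <= l -> l <= L ->
    vle (Htil (msigset layers l))
        (phi gamma (dims l) (Htil (msigset layers l.-1))).
Proof.
case=> [//|k] _ hkL J /=.
have hN : 0 < dims k.+1 by apply: dims_pos.
set S' := msigset layers k.+1; set S := msigset layers k.
rewrite /Htil (ts_hist _ _ (fun t => @bigminn_le _ _ _)).
rewrite /phi (ts_phiish _ _ _ (fun t => @bigminn_le _ _ _)).
have hpre : forall t, t \in S' -> msprefix t \in S.
  move=> t; rewrite !inE => /asboolP [x <-]; apply/asboolP; exists x.
  by rewrite msig_prefix.
rewrite (partition_big (@msprefix dims k) (fun p => p \in S) hpre) /=.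
apply: leq_sum => p hp.
set Tp := [set t in S' | msprefix t == p].
apply: (@leq_trans (\sum_(t in Tp) (J <= minn (minones p) (ones (lastsig t))))).
  apply: eq_leq; apply: eq_big => [t|t /andP[_ /eqP <-]]; first by rewrite /Tp inE.
  by rewrite -minones_S.
rewrite -(@big_imset _ _ _ _ _ (@lastsig dims k) Tp (fun s => (J <= minn (minones p) (ones s)) : nat)); last first.
  move=> t1 t2; rewrite !inE => /andP[_ /eqP h1] /andP[_ /eqP h2] hl.
  by apply: prefix_inj => //; rewrite h1 h2.
apply: (@per_prefix R dims layers gamma hgamma) => // s /imsetP [t]; rewrite inE => /andP[].
rewrite inE => /asboolP [x <-] /eqP hpx ->.
by exists x; rewrite -msig_prefix hpx msig_last.
Qed.
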